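(* Let $d\ge1$, $a$, $b$ be integers and $x_0$ a real number. If $\pi(x;d,a)\ge\pi(x;d,b)$ for all $x\le x_0$, then for all $x\le x_0$ both $N(x;d,a)\ge N(x;d,b)$ and $\mu_{d,a}(x)\ge\mu_{d,b}(x)$.
   Context: $\pi(x;d,a)$ is the number of primes $p\le x$ with $p\equiv a\pmod d$. Let $S_{d,a}$ be the set of positive integers all of whose prime divisors $p$ satisfy $p\equiv a\pmod d$ (including $1$). Then $N(x;d,a)=\#\{n\le x: n\in S_{d,a}\}$ and $\mu_{d,a}(x)=\sum_{n\le x,\ n\in S_{d,a}}1/n$ (in the paper, $\mu_{g_{d,a}}(x)$ with $g_{d,a}$ the indicator of $S_{d,a}$). *)

(* Defs.v *)
From mathcomp Require Import all_boot all_order all_algebra.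
From mathcomp Require Import reals.
Set Implicit Arguments. Unset Strict Implicit. Unset Printing Implicit Defensive.
Import Order.TTheory GRing.Theory Num.Theory.
Local Open Scope ring_scope.

Definition congr_mod (d a : int) (p : nat) : bool := (p%:Z == a %[mod d])%Z.

(* n is in S_{d,a}: every prime divisor p of n satisfies p == a (mod d).
   (1 is in S_{d,a}; 0 is excluded separately by ranging over n >= 1.) *)
Definition inS (d a : int) (n : nat) : bool := all (congr_mod d a) (primes n).

(* floor of x for x >= 0, and 0 for x < 0: the integers 1 <= n <= x are exactly
   those 1 <= n <= truncn x. *)

Definition pi_count {R : realType} (d a : int) (x : R) : nat :=
  \sum_(0 <= p < (Num.truncn x).+1 | prime p && congr_mod d a p) 1%N.

Definition N_count {R : realType} (d a : int) (x : R) : nat :=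
  \sum_(1 <= n < (Num.truncn x).+1 | inS d a n) 1%N.

Definition mu {R : realType} (d a : int) (x : R) : R :=
  \sum_(1 <= n < (Num.truncn x).+1 | inS d a n) (n%:R)^-1.

(* Main.v *)
Require Import Defs.
From mathcomp Require Import all_boot all_order all_algebra.
From mathcomp Require Import reals.
Import Order.TTheory GRing.Theory Num.Theory.

Lemma prod_seq_gt0 (s : seq nat) (F : nat -> nat) :
  (forall i, i \in s -> 0 < F i) -> 0 < \prod_(i <- s) F i.
Proof.
elim: s => [|x s IH] H; first by rewrite big_nil.
rewrite big_cons muln_gt0 H ?mem_head //= IH // => i Hi.
by apply: H; rewrite inE Hi orbT.
Qed.


Lemma logn_prod_seq r (s : seq nat) (F : nat -> nat) :
  (forall i, i \in s -> 0 < F i) ->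
  logn r (\prod_(i <- s) F i) = \sum_(i <- s) logn r (F i).
Proof.
elim: s => [|x s IH] H; first by rewrite !big_nil logn1.
have H' : forall i, i \in s -> 0 < F i by move=> i Hi; apply: H; rewrite inE Hi orbT.
rewrite !big_cons lognM ?H ?mem_head ?IH //; exact: prod_seq_gt0.
Qed.


Lemma sum_eq_pick (p : nat) (s : seq nat) (f : nat -> nat) : uniq s ->
  \sum_(q <- s) (p == q) * f q = (p \in s) * f p.
Proof.
elim: s => [|x s IH] /=; first by rewrite big_nil.
case/andP=> xs us; rewrite big_cons IH // inE.
case: eqP => [->|_]; last by rewrite mul0n.
by rewrite (negbTE xs) /= mul1n mul0n addn0.
Qed.


Definition phi (g : nat -> nat) (n : nat) := \prod_(p <- primes n) g p ^ logn p n.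

Lemma logn_phi g n r : (forall p, p \in primes n -> prime (g p)) ->
  logn r (phi g n) = \sum_(q <- primes n) (r == g q) * logn q n.
Proof.
move=> Hg; rewrite /phi logn_prod_seq.
  by apply: eq_big_seq => q Hq; rewrite lognX (logn_prime r (Hg q Hq)) mulnC.
by move=> i Hi; rewrite expn_gt0 prime_gt0 ?Hg.
Qed.

Lemma phi_gt0 g n : (forall p, p \in primes n -> prime (g p)) -> 0 < phi g n.
Proof. by move=> Hg; apply: prod_seq_gt0 => i Hi; rewrite expn_gt0 prime_gt0 ?Hg. Qed.

Lemma phi_id n : 0 < n -> phi id n = n.
Proof.
have Hid : forall p, p \in primes n -> prime (id p) by move=> p; rewrite mem_primes => /andP[].
move=> n0; apply: eqn_from_log => //; first exact: phi_gt0.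
move=> r; rewrite logn_phi // sum_eq_pick ?primes_uniq //.
by case: (boolP (r \in primes n)) => [_|]; rewrite ?mul1n // -logn_gt0 lt0n negbK mul0n => /eqP.
Qed.

Lemma phi_le g n : 0 < n -> (forall p, p \in primes n -> prime (g p) && (g p <= p)) ->
  phi g n <= n.
Proof.
move=> n0 H; rewrite -[X in _ <= X](phi_id n n0) /phi big_seq [X in _ <= X]big_seq.
apply: leq_prod => p Hp; rewrite leq_exp2r ?logn_gt0 //.
by case/andP: (H p Hp).
Qed.

Lemma phi_log g (D : pred nat) n p : {in D &, injective g} -> {subset primes n <= D} ->
  (forall q, q \in D -> prime (g q)) -> p \in D -> logn (g p) (phi g n) = logn p n.
Proof.
move=> inj sub Hg pD; rewrite logn_phi; last by move=> q /sub; apply: Hg.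
rewrite (eq_big_seq (fun q => (p == q) * logn q n)); last first.
  by move=> q Hq; rewrite (inj_in_eq inj) // sub.
rewrite sum_eq_pick ?primes_uniq //.
by case: (boolP (p \in primes n)) => [_|]; rewrite ?mul1n // -logn_gt0 lt0n negbK mul0n => /eqP.
Qed.

Lemma phi_primes g n r : (forall p, p \in primes n -> prime (g p)) ->
  r \in primes (phi g n) -> exists2 q, q \in primes n & r = g q.
Proof.
move=> Hg; rewrite -logn_gt0 logn_phi //.
case: (boolP (has (fun q => r == g q) (primes n))).
  by case/hasP=> q Hq /eqP ->; exists q.
move/hasPn=> H; rewrite big1_seq // => q /andP[_ Hq].
by rewrite (negbTE (H q Hq)).
Qed.

Definition Cnt (d c : int) (k : nat) : nat :=
  \sum_(0 <= p < k.+1) (prime p && congr_mod d c p).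

Lemma Cnt0 d c : Cnt d c 0 = 0.
Proof. by rewrite /Cnt big_nat1. Qed.

Lemma CntS d c k : Cnt d c k.+1 = Cnt d c k + (prime k.+1 && congr_mod d c k.+1).
Proof. by rewrite /Cnt big_nat_recr. Qed.

Lemma Cnt_mono d c i j : i <= j -> Cnt d c i <= Cnt d c j.
Proof.
elim: j => [|j IH]; first by rewrite leqn0 => /eqP ->.
rewrite leq_eqVlt => /orP[/eqP -> //|]; rewrite ltnS => /IH H.
by rewrite CntS (leq_trans H) // leq_addr.
Qed.

Lemma Cnt_lt d c i j : i < j -> prime j && congr_mod d c j -> Cnt d c i < Cnt d c j.
Proof.
case: j => [//|j]; rewrite ltnS => ij H.
by rewrite CntS H addn1 ltnS Cnt_mono.
Qed.

Lemma Cnt_gt0 d c j : prime j && congr_mod d c j -> 0 < Cnt d c j.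
Proof.
case: j => [//|j] H; by rewrite CntS H addn1.
Qed.

Lemma pi_Cnt (R : realType) d c (x : R) : pi_count d c x = Cnt d c (Num.truncn x).
Proof.
rewrite /pi_count /Cnt big_mkcond; apply: eq_bigr => i _.
by case: (prime i && congr_mod d c i).
Qed.

Definition gP d a b q := fun p => (Cnt d b q <= Cnt d a p) || (q < p).
Definition gfun d a b q : nat :=
  ex_minn (ex_intro (gP d a b q) q.+1 (introT orP (or_intror (ltnSn q)))).

Lemma g_props d a b q : prime q && congr_mod d b q -> Cnt d b q <= Cnt d a q ->
  [/\ gfun d a b q <= q, prime (gfun d a b q) && congr_mod d a (gfun d a b q)
    & Cnt d a (gfun d a b q) = Cnt d b q].
Proof.
move=> Hq Hle; rewrite /gfun; case: ex_minnP => m Pm Hmin.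
have mq : m <= q by apply: Hmin; rewrite /gP Hle.
have Pm' : Cnt d b q <= Cnt d a m.
  by move: Pm; rewrite /gP ltnNge mq orbF.
have pos := Cnt_gt0 d b q Hq.
case: m mq Pm Hmin Pm' => [|m] mq Pm Hmin Pm'.
  by move: (leq_trans pos Pm'); rewrite Cnt0.
have nP : ~~ gP d a b q m.
  by apply/negP => /Hmin; rewrite ltnn.
move: nP; rewrite /gP negb_or -ltnNge => /andP[lt _].
move: Pm'; rewrite CntS.
case: (prime m.+1 && congr_mod d a m.+1) => /= H.
  split => //; apply/eqP; rewrite eqn_leq H andbT.
  by rewrite addn1.
by move: (leq_trans lt H); rewrite addn0 ltnn.
Qed.

Local Open Scope ring_scope.

Lemma sum_sub (R : numDomainType) (s1 s2 : seq nat) (F : nat -> R) :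
  uniq s1 -> uniq s2 -> {subset s1 <= s2} -> (forall i, 0 <= F i) ->
  \sum_(i <- s1) F i <= \sum_(i <- s2) F i.
Proof.
move=> u1 u2 sub F0.
have -> : \sum_(i <- s1) F i = \sum_(i <- s2 | i \in s1) F i.
  rewrite -[RHS]big_filter; apply: perm_big; apply: uniq_perm => //.
    exact: filter_uniq.
  move=> i; rewrite mem_filter; case: (boolP (i \in s1)) => //= /sub ->.
  by [].
rewrite [X in _ <= X](bigID (mem s1)) /= lerDl; exact: sumr_ge0.
Qed.

Theorem corollary1 (R : realType) (d a b : int) (x0 : R) :
  (1 <= d)%R ->
  (forall x : R, x <= x0 -> (pi_count d b x <= pi_count d a x)%N) ->
  forall x : R, x <= x0 ->
    (N_count d b x <= N_count d a x)%N /\ mu d b x <= mu d a x.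
Proof.
move=> hd H x hx.
set X := Num.truncn x.
have HC : forall k, (k <= X)%N -> (Cnt d b k <= Cnt d a k)%N.
  move=> k kX; case: (boolP (0 <= x)) => x0'.
    have kx : (k%:R <= x) by rewrite -truncn_ge_nat.
    by have := H (k%:R) (le_trans kx hx); rewrite !pi_Cnt natrK.
  move: kX; rewrite /X truncn_floor (negbTE x0') leqn0 => /eqP ->.
  by rewrite !Cnt0.
pose D := [pred q | prime q && congr_mod d b q && (q <= X)%N].
pose g := gfun d a b.
have gD : forall q, q \in D -> [/\ (g q <= q)%N, prime (g q) && congr_mod d a (g q)
    & Cnt d a (g q) = Cnt d b q].
  move=> q /andP[Hq qX]; apply: g_props => //; exact: HC.
have ginj : {in D &, injective g}.
  move=> q q' Hq Hq' e.
  have ec : Cnt d b q = Cnt d b q'.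
    by case: (gD q Hq) => _ _ <-; case: (gD q' Hq') => _ _ <-; rewrite e.
  case/andP: Hq => Hq _; case/andP: Hq' => Hq' _.
  case: (ltngtP q q') => // lt.
    by move: (Cnt_lt d b q q' lt Hq'); rewrite ec ltnn.
  by move: (Cnt_lt d b q' q lt Hq); rewrite ec ltnn.
pose s := index_iota 1 X.+1.
have subD : forall n, n \in s -> inS d b n -> {subset primes n <= D}.
  move=> n; rewrite mem_index_iota => /andP[n1 nX] bn p pn.
  have := pn; rewrite mem_primes => /and3P[pp n0 pdn].
  rewrite inE pp /=; apply/andP; split; first by move/allP: bn; apply.
  by rewrite -ltnS (leq_ltn_trans (dvdn_leq n0 pdn) nX).
have gpr : forall n, n \in s -> inS d b n -> forall p, p \in primes n -> prime (g p).
  by move=> n ns bn p /(subD n ns bn) /gD [_ /andP[]].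
have key : forall n, n \in s -> inS d b n ->
   [/\ (0 < phi g n)%N, (phi g n <= n)%N & inS d a (phi g n)].
  move=> n ns bn; split.
  - exact: phi_gt0 (gpr n ns bn).
  - apply: phi_le; first by move: ns; rewrite mem_index_iota => /andP[].
    by move=> p /(subD n ns bn) /gD [-> /andP[-> _] _].
  - apply/allP => r /(phi_primes _ _ _ (gpr n ns bn)) [q qn ->].
    by case: (gD q (subD n ns bn q qn)) => _ /andP[].
have z : forall p k, p \notin primes k -> logn p k = 0%N.
  by move=> p k; rewrite -logn_gt0 lt0n negbK => /eqP.
have phinj : {in [seq n <- s | inS d b n] &, injective (phi g)}.
  move=> n m; rewrite !mem_filter => /andP[bn ns] /andP[bm ms] e.
  have n0 : (0 < n)%N by move: ns; rewrite mem_index_iota => /andP[].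
  have m0 : (0 < m)%N by move: ms; rewrite mem_index_iota => /andP[].
  apply: eqn_from_log => // p.
  case: (boolP (p \in D)) => pD.
    rewrite -(phi_log g D n p ginj (subD n ns bn)) //; last by move=> q /gD [_ /andP[]].
    rewrite -(phi_log g D m p ginj (subD m ms bm)) //; last by move=> q /gD [_ /andP[]].
    by rewrite e.
  rewrite !z //; apply/negP => /(subD _ _ _) H'.
    by move: pD; rewrite H'.
  by move: pD; rewrite H'.
have main : forall w : nat -> R, (forall i, 0 <= w i) ->
    (forall i j, (0 < i)%N -> (i <= j)%N -> w j <= w i) ->
    \sum_(1 <= n < X.+1 | inS d b n) w n <= \sum_(1 <= n < X.+1 | inS d a n) w n.
  move=> w w0 wm.
  apply: (le_trans (_ : _ <= \sum_(1 <= n < X.+1 | inS d b n) w (phi g n))).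
    rewrite big_seq_cond [X in _ <= X]big_seq_cond; apply: ler_sum => n /andP[ns bn].
    by case: (key n ns bn) => p0 ple _; apply: wm.
  rewrite -big_filter -(big_map (phi g) xpredT w) -[X in _ <= X]big_filter.
  apply: sum_sub => //.
  - by rewrite (map_inj_in_uniq phinj) filter_uniq // iota_uniq.
  - by rewrite filter_uniq // iota_uniq.
  - move=> m /mapP [n]; rewrite mem_filter => /andP[bn ns] ->.
    case: (key n ns bn) => p0 ple pa; rewrite mem_filter pa /= mem_index_iota p0 /=.
    by move: ns; rewrite mem_index_iota => /andP[_]; apply: leq_ltn_trans.
split.
  rewrite -(ler_nat R) /N_count !natr_sum; apply: main => // i j _ _.
rewrite /mu; apply: main => [i|i j i0 ij]; first by rewrite invr_ge0 ler0n.
rewrite lef_pV2 ?posrE ?ltr0n ?ler_nat //; exact: leq_trans ij.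
Qed.
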